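(* Let $\alpha\in(0,1)$ and define $\|F\|=\max\{\|F\|_\infty,|\int_{-\infty}^0x\,dF(x)|\}$. Then for all distribution functions $F,G$ on $\mathbb R$ with $\|F\|<\infty$ and $\|G\|<\infty$, $$0\le\mathrm{CVaR}_\alpha(G)-\mathrm{CVaR}_\alpha(F)+\frac1\alpha\int_{-\infty}^{\mathrm{VaR}_\alpha(F)}\bigl(G(y)-F(y)\bigr)\,dy\le\frac1\alpha\|F-G\|\,\bigl|\mathrm{VaR}_\alpha(F)-\mathrm{VaR}_\alpha(G)\bigr|.$$
   Context: $\|F\|_\infty=\sup_x|F(x)|$. For a distribution function $F$, $\mathrm{VaR}_\alpha(F)=\inf\{y\in\mathbb R:F(y)\ge\alpha\}$ and $\mathrm{CVaR}_\alpha(F)=\mathrm{VaR}_\alpha(F)-\frac1\alpha\int_{-\infty}^{\mathrm{VaR}_\alpha(F)}F(y)\,dy$. *)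

(* Defs.v *)
From HB Require Import structures.
From mathcomp Require Import all_boot all_order all_algebra.
From mathcomp Require Import all_classical all_reals all_analysis.
Set Implicit Arguments. Unset Strict Implicit. Unset Printing Implicit Defensive.
Import Order.TTheory GRing.Theory Num.Theory.
Import numFieldNormedType.Exports.
Local Open Scope classical_set_scope.
Local Open Scope ring_scope.

(* A distribution function on R: nondecreasing, right-continuous,
   with limit 0 at -oo and 1 at +oo (MathComp-Analysis' cumulativeBounded). *)
Notation distrfun R := (cumulativeBounded (0:R) (1:R)).

Section Risk.
Context {R : realType}.

Definition VaR (alpha : R) (F : R -> R) : R := inf [set y : R | alpha <= F y].

Definition CVaR (alpha : R) (F : R -> R) : \bar R :=
  ((VaR alpha F)%:E -
   (alpha^-1)%:E * \int[lebesgue_measure]_(y in `]-oo, VaR alpha F]) (F y)%:E)%E.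

Definition supnorm (H : R -> R) : R := sup [set `|H x| | x in [set: R]].

Definition negmean (F : distrfun R) : \bar R :=
  (\int[lebesgue_stieltjes_measure F]_(x in `]-oo, (0%R:R)]%classic) x%:E)%E.

Definition dnorm (F : distrfun R) : \bar R :=
  Order.max (supnorm F)%:E `|negmean F|%E.

(* ||F - G||, where the Stieltjes integral against d(F-G) is
   int x dF - int x dG (the signed measure dF - dG). *)
Definition dnorm_diff (F G : distrfun R) : \bar R :=
  Order.max (supnorm (fun x => F x - G x))%:E `|(negmean F - negmean G)%E|%E.

End Risk.

(* Main.v *)
Require Import Defs.
From HB Require Import structures.
From mathcomp Require Import all_boot all_order all_algebra.
From mathcomp Require Import all_classical all_reals all_analysis.
From mathcomp Require Import measurable_realfun.
From mathcomp Require Import ring lra.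
Import Order.TTheory GRing.Theory Num.Theory.
Local Open Scope classical_set_scope.
Local Open Scope ring_scope.

Lemma split_int (R : realType) (f : R -> \bar R) (b a : R) :
  b <= a -> measurable_fun `]-oo, a] f -> (forall x, (0 <= f x)%E) ->
  (\int[lebesgue_measure]_(x in `]-oo, a]) f x = \int[lebesgue_measure]_(x in `]-oo, b]) f x + \int[lebesgue_measure]_(x in `]b, a]) f x)%E.
Proof.
move=> ba mf f0.
rewrite (@itv_bndbnd_setU _ _ _ (BRight b)) ?bnd_simp//.
rewrite ge0_integral_setU//; first by rewrite -itv_bndbnd_setU ?bnd_simp.
apply/disj_setPS => x [/=]; rewrite !in_itv/= => h1 /andP[h2 _].
by move: h1; rewrite leNgt h2.
Qed.

Lemma count_le (R : realType) (b x : R) n :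
  \sum_(0 <= k < n) \1_(`]-oo, b - k%:R]) x <= Num.max 0 (b - x + 1).
Proof.
suff : \sum_(0 <= k < n) \1_(`]-oo, b - k%:R]) x <= (n%:R : R) /\
       \sum_(0 <= k < n) \1_(`]-oo, b - k%:R]) x <= Num.max 0 (b - x + 1) by move=> [].
elim: n => [|n [IH1 IH2]]; first by rewrite big_geq//; split; rewrite ?le_max lexx.
rewrite big_nat_recr//= indicE.
have -> : (x \in `]-oo, b - n%:R]%classic) = (x <= b - n%:R).
  by apply/idP/idP => [/set_mem|h]; [rewrite /= in_itv|apply/mem_set; rewrite /= in_itv].
have [xb|xb] := leP x (b - n%:R).
  rewrite -natr1 /=; split; first by rewrite lerD2r.
  rewrite le_max; apply/orP; right; rewrite lerD2r (le_trans IH1)//; lra.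
by rewrite addr0; split => //; rewrite (le_trans IH1)// ler_nat.
Qed.

Section S.
Variable R : realType.
Variable F : cumulativeBounded (0:R) (1:R).

Let ndF : {homo F : x y / x <= y}.
Proof. exact: cumulative_is_nondecreasing. Qed.

Lemma cdfNy e : 0 < e -> exists M, forall y, y < M -> `|F y| < e.
Proof.
move=> e0; have := cumulativeNy F; move/fcvgrPdist_lt => /(_ e e0).
case=> M [Mr HM]; exists M => y yM; have := HM y yM; by rewrite /= sub0r normrN.
Qed.

Lemma cdfy e : 0 < e -> exists M, forall y, M < y -> `|1 - F y| < e.
Proof.
move=> e0; have := cumulativey F; move/fcvgrPdist_lt => /(_ e e0).
case=> M [Mr HM]; exists M => y yM; exact: HM.
Qed.

Lemma df_ge0 x : 0 <= F x.
Proof.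
rewrite leNgt; apply/negP => Fx0.
have e0 : 0 < - F x by rewrite oppr_gt0.
have [M HM] := @cdfNy _ e0.
have := HM (Num.min x (M - 1)); rewrite gt_min ltrBlDr ltrDl ltr01 orbT => /(_ isT).
have := ndF (Num.min x (M - 1)) x; rewrite ge_min lexx => /(_ isT) => h.
rewrite ltr0_norm; last by apply: le_lt_trans h Fx0.
lra.
Qed.

Lemma df_le1 x : F x <= 1.
Proof.
rewrite leNgt; apply/negP => Fx1.
have e0 : 0 < F x - 1 by rewrite subr_gt0.
have [M HM] := @cdfy _ e0.
have := HM (Num.max x (M + 1)); rewrite lt_max ltrDl ltr01 orbT => /(_ isT).
have := ndF x (Num.max x (M + 1)); rewrite le_max lexx => /(_ isT) => h.
rewrite ler0_norm; last by rewrite subr_le0 (le_trans _ h)// ltW.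
lra.
Qed.

Local Notation mu := (lebesgue_stieltjes_measure F).

Lemma ls_itv s t : s <= t -> mu `]s, t]%classic = (F t - F s)%:E.
Proof.
move=> st; rewrite /lebesgue_stieltjes_measure /measure_extension measurable_mu_extE/=; last exact: is_ocitv.
by rewrite wlength_itv_bnd.
Qed.

Lemma cdf_le_mu t : ((F t)%:E <= mu `]-oo, t]%classic)%E.
Proof.
apply/lee_addgt0Pr => e e0.
have [M HM] := @cdfNy _ e0.
pose s := Num.min (t - 1) (M - 1).
have sM : s < M by rewrite /s gt_min; apply/orP; right; rewrite ltrBlDr ltrDl ltr01.
have st : s <= t by rewrite /s ge_min; apply/orP; left; rewrite lerBlDr lerDl ler01.
have h := HM s sM.
apply: (@le_trans _ _ (mu `]s, t]%classic + e%:E)%E); last first.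
  apply: leeD => //; apply: le_measure; rewrite ?inE /=.
  - exact: measurable_itv.
  - exact: measurable_itv.
  - by apply: subset_itvr; rewrite bnd_simp.
rewrite ls_itv// -EFinD lee_fin.
have := df_ge0 s; rewrite ger0_norm in h; last exact: df_ge0.
move=> ?; lra.
Qed.

Lemma mF (D : set R) : measurable D -> measurable_fun D F.
Proof. by move=> mD; apply: nondecreasing_measurable => //; exact: ndF. Qed.

Lemma mEF (D : set R) : measurable D -> measurable_fun D (fun x => (F x)%:E).
Proof. by move=> mD; apply/measurable_EFinP; exact: mF. Qed.

Lemma P_fin : (dnorm F < +oo)%E ->
  (\int[mu]_(x in `]-oo, (0%R:R)]) (- x)%:E < +oo)%E.
Proof.
rewrite /dnorm gt_max => /andP[_ h].
have E : (\int[mu]_(x in `]-oo, (0%R:R)]) (- x)%:E = - negmean F)%E.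
  rewrite /negmean -integralN.
    by apply: eq_integral => x _; rewrite EFinN.
  rewrite fin_num_adde_defr//.
  rewrite (eq_integral (fun=> 0%E)) ?integral0// => x.
  rewrite inE /= in_itv /= => x0.
  by rewrite funeposE; apply/max_idPr; rewrite lee_fin.
rewrite E; apply: le_lt_trans h; rewrite -abseN; exact: lee_abs.
Qed.

Lemma intF_fin_neg b : b <= -1 ->
  (\int[mu]_(x in `]-oo, (0%R:R)]) (- x)%:E < +oo)%E ->
  (\int[lebesgue_measure]_(y in `]-oo, b]) (F y)%:E < +oo)%E.
Proof.
move=> b1 hP.
pose A (k : nat) : set R := `]b - k.+1%:R, b - k%:R]%classic.
pose g (k : nat) (y : R) := ((F (b - k%:R) * \1_(A k) y)%:E).
have mg k : measurable_fun `]-oo, b] (g k).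
  apply/measurable_EFinP; apply: measurable_funM => //; apply: measurable_indic; exact: measurable_itv.
have g0 k y : (0 <= g k y)%E by rewrite lee_fin mulr_ge0 ?df_ge0// indicE ler0n.
have step1 : (\int[lebesgue_measure]_(y in `]-oo, b]) (F y)%:E <=
    \int[lebesgue_measure]_(y in `]-oo, b]) (\sum_(k <oo) g k y))%E.
  apply: ge0_le_integral => //.
  - by move=> y _; rewrite lee_fin df_ge0.
  - exact: mEF.
  - exact: (@ge0_emeasurable_sum _ _ _ _ g xpredT (fun k x _ _ => g0 k x) (fun k _ => mg k)).
  move=> y; rewrite /= in_itv /= => yb.
  have by0 : 0 <= b - y by rewrite subr_ge0.
  have := truncn_itv by0; set k0 := Num.trunc (b - y) => /andP[k1 k2].
  apply: (@le_trans _ _ (g k0 y)).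
    have yA : y \in A k0 by apply/mem_set; rewrite /A /= in_itv /=; apply/andP; split; lra.
    rewrite /g indicE yA mulr1 lee_fin; apply: ndF; lra.
  apply: (@le_trans _ _ (\sum_(0 <= i < k0.+1) g i y)%E); last exact: nneseries_lim_ge.
  by rewrite big_nat_recr//= leeDr// sume_ge0.
rewrite integral_nneseries in step1; [|exact: measurable_itv|by move=> k; exact: mg|by move=> k x _; exact: g0].
have mA k : measurable (A k) by exact: measurable_itv.
have step2 : (\sum_(k <oo) \int[lebesgue_measure]_(y in `]-oo, b]) g k y <=
              \sum_(k <oo) (F (b - k%:R))%:E)%E.
  apply: lee_nneseries => [k _ _|k _]; first by apply: integral_ge0 => y _; exact: g0.
  under eq_integral => y _ do rewrite /g EFinM.
  rewrite ge0_integralZl_EFin ?df_ge0//; last first.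
    apply: measurableT_comp => //; apply: measurable_indic; exact: (mA k).
  rewrite integral_indic //; last exact: measurable_itv.
  rewrite -[X in (_ <= X)%E]mule1; apply: lee_wpmul2l; first by rewrite lee_fin df_ge0.
  apply: (@le_trans _ _ (lebesgue_measure (A k))).
    by apply: measureIl; [exact: mA|exact: measurable_itv].
  rewrite /A lebesgue_measure_itv /= lte_fin ltrD2l ltrN2 ltr_nat ltnSn -EFinD lee_fin.
  rewrite -natr1; lra.
have step3 : (\sum_(k <oo) (F (b - k%:R))%:E <=
              \sum_(k <oo) mu `]-oo, (b - k%:R)%R]%classic)%E.
  apply: lee_nneseries => [k _ _|k _]; [by rewrite lee_fin df_ge0 | exact: cdf_le_mu].
have mI k : measurable_fun `]-oo, (0%R:R)]
    (fun x => (\1_(`]-oo, (b - k%:R)%R]%classic : set R) x)%:E).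
  by apply: measurableT_comp => //; apply: measurable_indic; exact: measurable_itv.
have h0 k x : (0 <= (\1_(`]-oo, (b - k%:R)%R]%classic : set R) x)%:E)%E.
  by rewrite lee_fin indicE ler0n.
have step4 : (\sum_(k <oo) mu `]-oo, (b - k%:R)%R]%classic =
   \int[mu]_(x in `]-oo, (0%R:R)]) (\sum_(k <oo) (\1_(`]-oo, (b - k%:R)%R]%classic : set R) x)%:E))%E.
  rewrite integral_nneseries; [|exact: measurable_itv|exact: mI|by move=> k x _; rewrite lee_fin indicE ler0n].
  apply: eq_eseriesr => k _.
  rewrite integral_indic; [|exact: measurable_itv|exact: measurable_itv].
  congr (mu _); apply/esym/setIidl => x /=; rewrite !in_itv /= => h.
  apply: (le_trans h); have := ler0n R k; lra.
have step5 : (\int[mu]_(x in `]-oo, (0%R:R)]) (\sum_(k <oo) (\1_(`]-oo, (b - k%:R)%R]%classic : set R) x)%:E)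
    <= \int[mu]_(x in `]-oo, (0%R:R)]) (- x)%:E)%E.
  apply: ge0_le_integral.
  - exact: measurable_itv.
  - by move=> x _; apply: nneseries_ge0 => k _ _; rewrite lee_fin indicE ler0n.
  - by apply: (ge0_emeasurable_sum (P := xpredT)) => [k x _ _|k _]; [exact: h0|exact: mI].
  - apply: measurableT_comp => //; apply: measurableT_comp => //.
  move=> x; rewrite /= in_itv /= => x0.
  apply: lime_le; first by apply: is_cvg_nneseries => k _ _; rewrite lee_fin indicE ler0n.
  apply: nearW => n.
  rewrite sumEFin lee_fin (le_trans (count_le _ b x n))// ge_max; apply/andP; split; lra.
rewrite step4 in step3.
apply: (le_lt_trans step1); apply: (le_lt_trans step2); apply: (le_lt_trans step3).
exact: (le_lt_trans step5).
Qed.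

Lemma intF_fin a : (dnorm F < +oo)%E ->
  (\int[lebesgue_measure]_(y in `]-oo, a]) (F y)%:E < +oo)%E.
Proof.
move=> hF; have hP := P_fin hF.
pose b := Num.min a (-1).
have ba : b <= a by rewrite /b ge_min lexx.
have b1 : b <= -1 by rewrite /b ge_min lexx orbT.
rewrite (@split_int R (fun y => (F y)%:E) b a ba); [|exact: mEF|by move=> x; rewrite lee_fin df_ge0].
apply: lte_add_pinfty; first exact: intF_fin_neg.
apply: (@le_lt_trans _ _ (\int[lebesgue_measure]_(y in `]b, a]) (cst 1%:E) y)%E).
  apply: ge0_le_integral => //.
  - by move=> x _; rewrite lee_fin df_ge0.
  - exact: mEF.
  - by move=> x _; rewrite lee_fin df_le1.
rewrite integral_cst; last exact: measurable_itv.
rewrite mul1e; have := lebesgue_measure_itv `]b, a]; rewrite /= => ->; case: ifP => _ //; by rewrite -EFinB ltry.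
Qed.

Lemma intF_integrable a : (dnorm F < +oo)%E ->
  lebesgue_measure.-integrable `]-oo, a] (EFin \o F).
Proof.
move=> hF; apply/integrableP; split; first exact: mEF.
apply: le_lt_trans (intF_fin a hF); rewrite le_eqVlt; apply/orP; left; apply/eqP; apply: eq_integral => y _ /=.
by rewrite ger0_norm // df_ge0.
Qed.

Variable alpha : R.
Hypotheses (a0 : 0 < alpha) (a1 : alpha < 1).

Lemma VaR_ne : [set y : R | alpha <= F y] !=set0.
Proof.
have e0 : 0 < 1 - alpha by rewrite subr_gt0.
have [M HM] := @cdfy _ e0.
exists (M + 1); rewrite /=; have := HM (M + 1); rewrite ltrDl ltr01 => /(_ isT).
have := df_le1 (M + 1). move=> h1 h2; rewrite ger0_norm in h2; move: (a0) (a1) => ? ?; lra.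
Qed.

Lemma VaR_lb : has_lbound [set y : R | alpha <= F y].
Proof.
have e0 := a0.
have [M HM] := @cdfNy _ e0.
exists M => y /= ay; rewrite leNgt; apply/negP => yM.
have := HM y yM; rewrite ger0_norm ?df_ge0//; move: (a0) (a1) => ? ?; lra.
Qed.

Lemma VaR_le y : alpha <= F y -> VaR alpha F <= y.
Proof. by move=> ay; apply: ge_inf; [exact: VaR_lb|]. Qed.

Lemma VaR_gt y : VaR alpha F < y -> alpha <= F y.
Proof.
move=> /(inf_lt VaR_ne) [s /= As sy]; apply: le_trans As _; apply: ndF; exact: ltW.
Qed.

Lemma VaR_lt y : y < VaR alpha F -> F y < alpha.
Proof. by move=> yV; rewrite ltNge; apply/negP => /VaR_le; rewrite leNgt yV. Qed.

End S.

Lemma int_cst_itv (R : realType) (c x y : R) (b0 b1 : bool) : x <= y ->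
  (\int[lebesgue_measure]_(z in [set` Interval (BSide b0 x) (BSide b1 y)]) (cst c%:E) z
    = (c * (y - x))%:E)%E.
Proof.
move=> xy; rewrite integral_cst; last exact: measurable_itv.
have := lebesgue_measure_itv (Interval (BSide b0 x) (BSide b1 y)); rewrite /= => ->.
move: xy; rewrite le_eqVlt => /orP[/eqP <-|xy].
  by rewrite subrr mulr0; case: ifP => _; rewrite ?subee ?mule0.
rewrite ifT; first by rewrite -EFinB -EFinM.
by case: b0; case: b1; rewrite /Order.lt /=.
Qed.

Lemma supnorm_ub (R : realType) (F G : distrfun R) x :
  `|F x - G x| <= supnorm (fun x => F x - G x).
Proof.
apply: ub_le_sup; last by exists x.
exists 1 => _ [z _ <-].
have := df_ge0 _ F z; have := df_le1 _ F z; have := df_ge0 _ G z; have := df_le1 _ G z.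
move=> *; rewrite ler_norml; apply/andP; split; lra.
Qed.

Theorem lemma27 (R : realType) (alpha : R) (F G : distrfun R) :
  0 < alpha < 1 ->
  (dnorm F < +oo)%E -> (dnorm G < +oo)%E ->
  (0 <= CVaR alpha G - CVaR alpha F
        + (alpha^-1)%:E *
          \int[lebesgue_measure]_(y in `]-oo, VaR alpha F]) (G y - F y)%:E)%E /\
  (CVaR alpha G - CVaR alpha F
        + (alpha^-1)%:E *
          \int[lebesgue_measure]_(y in `]-oo, VaR alpha F]) (G y - F y)%:E
   <= (alpha^-1)%:E * dnorm_diff F G * `|VaR alpha F - VaR alpha G|%:E)%E.
Proof.
move=> /andP[a0 a1] hF hG.
set v := VaR alpha F; set w := VaR alpha G.
set S := supnorm (fun x => F x - G x).
have hS x : `|F x - G x| <= S := supnorm_ub _ F G x.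
have S0 : 0 <= S := le_trans (normr_ge0 _) (hS 0).
have ai0 : 0 < alpha^-1 by rewrite invr_gt0.
have fin (f : distrfun R) (hf : (dnorm f < +oo)%E) (c : R) :
    exists r, (\int[lebesgue_measure]_(y in `]-oo, c]) (f y)%:E = r%:E)%E.
  exists (fine (\int[lebesgue_measure]_(y in `]-oo, c]) (f y)%:E)%E).
  rewrite fineK // ge0_fin_numE ?intF_fin //.
  by apply: integral_ge0 => y _; rewrite lee_fin df_ge0.
have [rA eA] := fin F hF v.
have [rB eB] := fin G hG w.
have [rC eC] := fin G hG v.
have eD : (\int[lebesgue_measure]_(y in `]-oo, v]) (G y - F y)%:E = (rC - rA)%:E)%E.
  rewrite EFinB -eA -eC -integralB_EFin //; last 2 first.
  - exact: intF_integrable.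
  - exact: intF_integrable.
rewrite /CVaR -/v -/w eA eB eD.
rewrite -!EFinM -!EFinB -EFinD.
set Q := w - alpha^-1 * rB - (v - alpha^-1 * rA) + alpha^-1 * (rC - rA).
have aa : alpha^-1 * alpha = 1 by rewrite mulVf // gt_eqF.
suff [Q0 QS] : 0 <= Q /\ Q <= alpha^-1 * S * `|v - w|.
  split; first by rewrite lee_fin.
  apply: (@le_trans _ _ (alpha^-1 * S * `|v - w|)%:E); first by rewrite lee_fin.
  rewrite !EFinM; apply: lee_wpmul2r; first by rewrite lee_fin.
  apply: lee_wpmul2l; first by rewrite lee_fin ltW.
  by rewrite /dnorm_diff le_max lexx.
have mG (D : set R) : measurable D -> measurable_fun D (fun y => (G y)%:E) by apply: mEF.
have G0 x : (0 <= (G x)%:E)%E by rewrite lee_fin df_ge0.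
have [vw|wv] := leP v w.
- have eJ : (\int[lebesgue_measure]_(y in `]v, w]) (G y)%:E = (rB - rC)%:E)%E.
    move: eB; rewrite (@split_int R (fun y => (G y)%:E) v w vw) //; last exact: mG.
    by rewrite eC => h; rewrite EFinB -h [(rC%:E + _)%E]addeC addeK.
  rewrite -integral_itv_bndo_bndc in eJ; last exact: mG.
  have J1 : rB - rC <= alpha * (w - v).
    rewrite -lee_fin -eJ -(int_cst_itv _ alpha _ _ false true vw).
    apply: ge0_le_integral => //; first exact: mG.
    move=> y; rewrite /= in_itv /= => /andP[vy yw].
    by rewrite lee_fin ltW // (VaR_lt _ _ _ a0 a1).
  have J2 : alpha * (w - v) <= rB - rC + S * (w - v).
    rewrite -lee_fin EFinD -eJ -(int_cst_itv _ S _ _ false true vw) -(int_cst_itv _ alpha _ _ false true vw).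
    rewrite -ge0_integralD //; last exact: mG.
    apply: ge0_le_integral => //.
    - by move=> x _; rewrite /= lee_fin ltW.
    - by apply: emeasurable_funD => //; exact: mG.
    move=> y; rewrite /= in_itv /= => /andP[vy yw].
    have := VaR_gt _ _ _ a0 a1 y vy; have := hS y; rewrite ler_norml => /andP[h1 h2] h3.
    rewrite -EFinD lee_fin; lra.
  have -> : Q = alpha^-1 * (alpha * (w - v) - (rB - rC)).
    by rewrite /Q; field; rewrite gt_eqF.
  split; first by rewrite mulr_ge0 ?subr_ge0 // ltW.
  rewrite distrC ger0_norm ?subr_ge0 // -mulrA ler_wpM2l ?(ltW ai0) //; lra.
- have vw := ltW wv.
  have eJ : (\int[lebesgue_measure]_(y in `]w, v]) (G y)%:E = (rC - rB)%:E)%E.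
    move: eC; rewrite (@split_int R (fun y => (G y)%:E) w v vw) //; last exact: mG.
    by rewrite eB => h; rewrite EFinB -h [(rB%:E + _)%E]addeC addeK.
  have J1 : alpha * (v - w) <= rC - rB.
    rewrite -lee_fin -eJ -(int_cst_itv _ alpha _ _ false false vw).
    apply: ge0_le_integral => //.
    - by move=> x _; rewrite /= lee_fin ltW.
    - exact: mG.
    move=> y; rewrite /= in_itv /= => /andP[wy yv].
    by rewrite lee_fin (VaR_gt _ _ _ a0 a1).
  rewrite -integral_itv_bndo_bndc in eJ; last exact: mG.
  have J2 : rC - rB <= (alpha + S) * (v - w).
    rewrite -lee_fin -eJ -(int_cst_itv _ (alpha + S) _ _ false true vw).
    apply: ge0_le_integral => //; first exact: mG.
    move=> y; rewrite /= in_itv /= => /andP[wy yv].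
    have := VaR_lt _ _ _ a0 a1 y yv; have := hS y; rewrite ler_norml => /andP[h1 h2] h3.
    rewrite lee_fin; lra.
  have -> : Q = alpha^-1 * ((rC - rB) - alpha * (v - w)).
    by rewrite /Q; field; rewrite gt_eqF.
  split; first by rewrite mulr_ge0 ?subr_ge0 // ltW.
  rewrite ger0_norm ?subr_ge0 // -mulrA ler_wpM2l ?(ltW ai0) //; lra.
Qed.
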